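(* Let $R$ be a commutative ring and let $(A,d)$ be a differential graded $R$-algebra. (1) If the graded algebra $\ker(d)$ is graded-Noetherian, then $(A,d)$ is dg-Noetherian. (2) If $\ker(d)$ is graded-Artinian, then $(A,d)$ is dg-Artinian.
   Context: A differential graded (dg) $R$-algebra $(A,d)$ is a $\mathbb{Z}$-graded $R$-algebra $A$ with an $R$-linear endomorphism $d$, homogeneous of degree $1$, with $d^2=0$ and $d(ab)=d(a)b+(-1)^{|a|}a\,d(b)$ for homogeneous $a,b$. Then $\ker(d)$ (the cycles) is a graded subalgebra of $A$. A graded algebra is graded-Noetherian (resp. graded-Artinian) if it satisfies the ascending (resp. descending) chain condition on graded ideals. A dg-ideal of $(A,d)$ is a graded ideal $I$ with $d(I)\subseteq I$; $(A,d)$ is dg-Noetherian (resp. dg-Artinian) if it satisfies the ascending (resp. descending) chain condition on dg-ideals (i.e. on dg-submodules of $A$ viewed as a dg-module over itself). *)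

(* Defs.v *)
From HB Require Import structures.
From mathcomp Require Import all_boot all_order all_algebra.
Set Implicit Arguments. Unset Strict Implicit. Unset Printing Implicit Defensive.
Import Order.TTheory GRing.Theory Num.Theory.
Local Open Scope ring_scope.

(* A Z-grading on an R-algebra A is encoded by its family of homogeneous
   projections pi n : A -> A (R-linear), A = (+)_n pi n A. *)
Definition is_grading (R : comPzRingType) (A : algType R)
    (pi : int -> {linear A -> A}) : Prop :=
  [/\
      forall (m n : int) (x : A), pi m (pi n x) = if m == n then pi n x else 0,
      forall x : A, exists s : seq int, uniq s /\ x = \sum_(n <- s) pi n x,
      forall (m n : int) (x y : A),
        pi (m + n) (pi m x * pi n y) = pi m x * pi n y
    &
      pi 0 1 = 1 ].

Definition homog (R : comPzRingType) (A : algType R)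
    (pi : int -> {linear A -> A}) (n : int) (x : A) : Prop := pi n x = x.

Definition is_dg_algebra (R : comPzRingType) (A : algType R)
    (pi : int -> {linear A -> A}) (d : {linear A -> A}) : Prop :=
  [/\ is_grading pi,
      forall (n : int) (x : A), homog pi (n + 1) (d (pi n x)),
      forall x : A, d (d x) = 0
    &
      forall (m n : int) (x y : A),
        d (pi m x * pi n y) =
        d (pi m x) * pi n y + (-1) ^+ `|m|%N * (pi m x * d (pi n y)) ].

Definition cycles (R : comPzRingType) (A : algType R) (d : {linear A -> A})
  : A -> Prop := fun x => d x = 0.

(* I is a graded (left) ideal of the graded subring S of A (S given as a
   predicate which is a graded subalgebra) *)
Definition graded_ideal_of (R : comPzRingType) (A : algType R)
    (pi : int -> {linear A -> A}) (S I : A -> Prop) : Prop :=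
  [/\ forall x, I x -> S x,
      I 0,
      forall x y, I x -> I y -> I (x - y),
      forall s x, S s -> I x -> I (s * x)
    & forall (n : int) x, I x -> I (pi n x) ].

Definition dg_ideal (R : comPzRingType) (A : algType R)
    (pi : int -> {linear A -> A}) (d : {linear A -> A}) (I : A -> Prop) : Prop :=
  graded_ideal_of pi (fun _ => True) I /\ forall x, I x -> I (d x).

Definition ACC (T : Type) (P : (T -> Prop) -> Prop) : Prop :=
  forall I : nat -> T -> Prop,
    (forall k, P (I k)) ->
    (forall k x, I k x -> I k.+1 x) ->
    exists N, forall k, (N <= k)%N -> forall x, I k x <-> I N x.

Definition DCC (T : Type) (P : (T -> Prop) -> Prop) : Prop :=
  forall I : nat -> T -> Prop,
    (forall k, P (I k)) ->
    (forall k x, I k.+1 x -> I k x) ->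
    exists N, forall k, (N <= k)%N -> forall x, I k x <-> I N x.

Definition graded_noetherian (R : comPzRingType) (A : algType R)
    (pi : int -> {linear A -> A}) (S : A -> Prop) : Prop :=
  ACC (graded_ideal_of pi S).
Definition graded_artinian (R : comPzRingType) (A : algType R)
    (pi : int -> {linear A -> A}) (S : A -> Prop) : Prop :=
  DCC (graded_ideal_of pi S).

Definition dg_noetherian (R : comPzRingType) (A : algType R)
    (pi : int -> {linear A -> A}) (d : {linear A -> A}) : Prop :=
  ACC (dg_ideal pi d).
Definition dg_artinian (R : comPzRingType) (A : algType R)
    (pi : int -> {linear A -> A}) (d : {linear A -> A}) : Prop :=
  DCC (dg_ideal pi d).

(* Main.v *)
Require Import Defs.
From mathcomp Require Import all_boot all_order all_algebra.
Set Implicit Arguments. Unset Strict Implicit. Unset Printing Implicit Defensive.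
Import Order.TTheory GRing.Theory Num.Theory.
Local Open Scope ring_scope.

Theorem corollary2p3 (R : comPzRingType) (A : algType R)
    (pi : int -> {linear A -> A}) (d : {linear A -> A}) :
  is_dg_algebra pi d ->
  (graded_noetherian pi (cycles d) -> dg_noetherian pi d) /\
  (graded_artinian pi (cycles d) -> dg_artinian pi d).
Proof.
move=> [[Hpp Hdec Hmul H1] Hd1' Hdd Hleib].
have Hd1 : forall n x, pi (n + 1) (d (pi n x)) = d (pi n x) := Hd1'.
have pid : forall n x, pi n (d x) = d (pi (n - 1) x).
  move=> n x; have [s [_ e]] := Hdec x; rewrite e !linear_sum.
  apply: eq_bigr => k _.
  idtac.

  rewrite -{1}(Hd1 k x) Hpp Hd1 Hpp.
  have -> : (n == k + 1) = (n - 1 == k) by rewrite subr_eq.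
  by case: (n - 1 == k); rewrite ?linear0.
have cyc : forall m x, d x = 0 -> d (pi m x) = 0.
  move=> m x dx; have -> : pi m x = pi (m + 1 - 1) x by rewrite addrK.
  by rewrite -pid dx linear0.
pose Z (I : A -> Prop) := fun x => I x /\ d x = 0.
pose B (I : A -> Prop) := fun x => exists2 y, I y & x = d y.
have Zg : forall I, dg_ideal pi d I -> graded_ideal_of pi (cycles d) (Z I).
  move=> I [[_ I0 IB IM IP] Id]; split.
  - by move=> x [].
  - by split; rewrite ?linear0.
  - by move=> x y [Ix dx] [Iy dy]; split; [apply: (IB) | rewrite linearB dx dy subr0].
  - move=> s x ds [Ix dx]; split; first exact: IM.
    have [s1 [_ e1]] := Hdec s; have [s2 [_ e2]] := Hdec x.
    rewrite e1 e2 mulr_suml linear_sum big1 // => m _.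
    rewrite mulr_sumr linear_sum big1 // => n _.
    by rewrite Hleib !cyc // mul0r mulr0 mulr0 addr0.
  - by move=> n x [Ix dx]; split; [apply: (IP) | apply: cyc].
have Bg : forall I, dg_ideal pi d I -> graded_ideal_of pi (cycles d) (B I).
  move=> I [[_ I0 IB IM IP] Id].
  have Bsub : forall x y, B I x -> B I y -> B I (x - y).
    by move=> _ _ [x Ix ->] [y Iy ->]; exists (x - y); [apply: (IB) | rewrite linearB].
  have B0 : B I 0 by exists 0; rewrite ?linear0.
  have Badd : forall x y, B I x -> B I y -> B I (x + y).
    move=> x y Bx By; have -> : x + y = x - (0 - y) by rewrite sub0r opprK.
    by apply: (Bsub) => //; apply: (Bsub).
  have Bsum : forall (r : seq int) (F : int -> A), (forall i, B I (F i)) ->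
      B I (\sum_(i <- r) F i).
    move=> r F HF; elim: r => [|i r IH]; first by rewrite big_nil.
    by rewrite big_cons; apply: (Badd).
  split.
  - by move=> _ [y _ ->]; rewrite /cycles Hdd.
  - exact: B0.
  - exact: Bsub.
  - move=> s _ ds [y Iy ->].
    have [s1 [_ e1]] := Hdec s; have [s2 [_ e2]] := Hdec y.
    rewrite e1 e2 mulr_suml; apply: (Bsum) => m.
    rewrite linear_sum mulr_sumr; apply: (Bsum) => n.
    have := Hleib m n s y; rewrite cyc // mul0r add0r.
    have Ip : I (pi m s * pi n y) by apply: (IM) => //; apply: (IP).
    rewrite -signr_odd; case: (odd _) => H.
      rewrite expr1 mulN1r in H.
      have -> : pi m s * d (pi n y) = d (- (pi m s * pi n y)) by rewrite linearN H opprK.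
      by exists (- (pi m s * pi n y)) => //; rewrite -sub0r; apply: (IB).
    rewrite expr0 mul1r in H; rewrite -H.
    by exists (pi m s * pi n y).
  - move=> n _ [y Iy ->]; exists (pi (n - 1) y); first exact: IP.
    by rewrite pid.
have key : forall I J : A -> Prop, dg_ideal pi d I -> dg_ideal pi d J ->
    (forall x, I x -> J x) -> (forall x, Z J x -> I x) ->
    (forall x, B J x -> B I x) -> forall x, J x -> I x.
  move=> I J [[_ I0 IB IM IP] Id] [[_ J0 JB JM JP] Jd] IJ ZJ BJ x Jx.
  have [y Iy dxy] := BJ (d x) (ex_intro2 _ _ x Jx erefl).
  have Ixy : I (x - y).
    by apply: (ZJ); split; [apply: (JB) => //; apply: (IJ) | rewrite linearB dxy subrr].
  have -> : x = (x - y) - (0 - y) by rewrite sub0r opprK subrK.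
  by apply: (IB) => //; apply: (IB).
split.
- move=> Hn I HI Hmono.
  have mono : forall a b, (a <= b)%N -> forall x, I a x -> I b x.
    move=> a b /subnK <-; elim: (b - a)%N => [//|k IH] x Ix.
    by rewrite addSn; apply: (Hmono); apply: (IH).
  have [N1 HN1] := Hn (fun k => Z (I k)) (fun k => Zg _ (HI k))
    (fun k x '(conj Ix dx) => conj (Hmono k x Ix) dx).
  have [N2 HN2] := Hn (fun k => B (I k)) (fun k => Bg _ (HI k))
    (fun k x '(ex_intro2 y Iy e) => ex_intro2 _ _ y (Hmono k y Iy) e).
  exists (maxn N1 N2) => k Hk x; split; last by apply: (mono).
  apply: (key) => //.
  + by move=> z; apply: (mono).
  + move=> z Zz; have h1 := (HN1 k (leq_trans (leq_maxl _ _) Hk) z).1 Zz.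
    exact: ((HN1 (maxn N1 N2) (leq_maxl _ _) z).2 h1).1.
  + move=> z Bz; have h1 := (HN2 k (leq_trans (leq_maxr _ _) Hk) z).1 Bz.
    exact: ((HN2 (maxn N1 N2) (leq_maxr _ _) z).2 h1).
- move=> Hn I HI Hmono.
  have mono : forall a b, (a <= b)%N -> forall x, I b x -> I a x.
    move=> a b /subnK <-; elim: (b - a)%N => [//|k IH] x Ix.
    by apply: (IH); apply: (Hmono); rewrite -addSn.
  have [N1 HN1] := Hn (fun k => Z (I k)) (fun k => Zg _ (HI k))
    (fun k x '(conj Ix dx) => conj (Hmono k x Ix) dx).
  have [N2 HN2] := Hn (fun k => B (I k)) (fun k => Bg _ (HI k))
    (fun k x '(ex_intro2 y Iy e) => ex_intro2 _ _ y (Hmono k y Iy) e).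
  exists (maxn N1 N2) => k Hk x; split; first by apply: (mono).
  apply: (key) => //.
  + by move=> z; apply: (mono).
  + move=> z Zz; have h1 := (HN1 (maxn N1 N2) (leq_maxl _ _) z).1 Zz.
    exact: ((HN1 k (leq_trans (leq_maxl _ _) Hk) z).2 h1).1.
  + move=> z Bz; have h1 := (HN2 (maxn N1 N2) (leq_maxr _ _) z).1 Bz.
    exact: ((HN2 k (leq_trans (leq_maxr _ _) Hk) z).2 h1).
Qed.
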